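(* Let $K$ be a field, $P$ an arbitrary poset, and let $P=\bigsqcup_{i\in I}P_i$ be the decomposition of $P$ into its connected components. For $\alpha\in FI(P)$ and $i\in I$ let $\alpha_i\in FI(P_i)$ be the restriction $\alpha_i(x,y)=\alpha(x,y)$ for $x\le y$ in $P_i$. Then $\alpha$ is superregular in $FI(P)$ if and only if for every $i\in I$, $\alpha_i$ is either $0$ or invertible in $FI(P_i)$. (Equivalently, identifying $FI(P)$ with $\prod_{i\in I}FI(P_i)$, the set of superregular elements equals $\prod_{i\in I}U(P_i)^0$, where $U(P_i)$ is the group of units of $FI(P_i)$ and $U(P_i)^0=U(P_i)\cup\{0\}$.)
   Context: $K$ is a field, $P$ an arbitrary poset. $I(P)$ is the set of functions $\alpha$ assigning to each pair $x\le y$ in $P$ a value $\alpha(x,y)\in K$. An element $\alpha\in I(P)$ is a finitary series if for all $x<y$ in $P$ there are only finitely many pairs $(u,v)$ with $x\le u<v\le y$ and $\alpha(u,v)\neq0$; $FI(P)$ is the set of finitary series. $FI(P)$ is an associative $K$-algebra under pointwise addition and convolution $(\alpha\beta)(x,y)=\sum_{x\le z\le y}\alpha(x,z)\beta(z,y)$. Connected components of $P$ are the classes of the equivalence relation generated by comparability. An element $\alpha$ of an algebra $A$ is superregular if it is regular (some $\chi\in A$ has $\alpha\chi\alpha=\alpha$) and there is exactly one $\alpha^*\in A$ satisfying $\alpha\alpha^*\alpha=\alpha$ and $\alpha^*\alpha\alpha^*=\alpha^*$. *)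

(* Defs.v *)
From HB Require Import structures.
From mathcomp Require Import all_boot all_order all_algebra.
From Stdlib Require Import Relations ClassicalEpsilon ClassicalDescription.
Set Implicit Arguments. Unset Strict Implicit. Unset Printing Implicit Defensive.
Import GRing.Theory.
Local Open Scope ring_scope.

Section FI.
Variables (K : fieldType) (T : Type) (le : T -> T -> Prop).

Definition plt (x y : T) : Prop := le x y /\ x <> y.

(* elements of I(P) are represented by functions T -> T -> K; only the values
   at pairs x <= y matter, equality in I(P) is [ieq]. *)
Definition ieq (a b : T -> T -> K) : Prop :=
  forall x y, le x y -> a x y = b x y.

Definition finitary (a : T -> T -> K) : Prop :=
  forall x y, plt x y -> exists s : list (T * T),
    forall u v, le x u -> plt u v -> le v y -> a u v <> 0 -> List.In (u, v) s.

(* Sum of f over the z satisfying A, assuming only finitely many such z have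
   f z <> 0: the sum over any duplicate-free list of elements of A containing
   all those z (chosen by classical choice). *)
Definition fsum (A : T -> Prop) (f : T -> K) : K :=
  \sum_(z <- epsilon (inhabits (@nil T))
                 (fun s => List.NoDup s /\ (forall z, List.In z s -> A z) /\
                           (forall z, A z -> f z <> 0 -> List.In z s))) f z.

Definition conv (a b : T -> T -> K) : T -> T -> K :=
  fun x y => fsum (fun z => le x z /\ le z y) (fun z => a x z * b z y).

Definition fi_one : T -> T -> K :=
  fun x y => if excluded_middle_informative (x = y) then 1 else 0.

Definition fi_zero : T -> T -> K := fun _ _ => 0.

Definition fi_invertible (a : T -> T -> K) : Prop :=
  exists b, finitary b /\ ieq (conv a b) fi_one /\ ieq (conv b a) fi_one.

Definition fi_regular (a : T -> T -> K) : Prop :=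
  exists c, finitary c /\ ieq (conv (conv a c) a) a.

Definition fi_superregular (a : T -> T -> K) : Prop :=
  fi_regular a /\
  exists b, finitary b /\ ieq (conv (conv a b) a) a /\ ieq (conv (conv b a) b) b /\
    forall c, finitary c -> ieq (conv (conv a c) a) a ->
              ieq (conv (conv c a) c) c -> ieq c b.

Definition connected (x y : T) : Prop :=
  clos_refl_sym_trans T (fun a b => le a b \/ le b a) x y.

End FI.

Definition component (T : Type) (le : T -> T -> Prop) (x0 : T) : Type :=
  {x : T | connected le x0 x}.

Definition comp_le (T : Type) (le : T -> T -> Prop) (x0 : T) :
  component le x0 -> component le x0 -> Prop :=
  fun a b => le (proj1_sig a) (proj1_sig b).

Definition restrict (K : fieldType) (T : Type) (le : T -> T -> Prop) (x0 : T)
  (a : T -> T -> K) : component le x0 -> component le x0 -> K :=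
  fun u v => a (proj1_sig u) (proj1_sig v).

(* Main.v *)
Require Import Defs.
From HB Require Import structures.
From mathcomp Require Import all_boot all_order all_algebra.
From Stdlib Require Import Relations ClassicalEpsilon ClassicalDescription Classical
  FunctionalExtensionality PropExtensionality ProofIrrelevance Setoid Morphisms.
Set Implicit Arguments. Unset Strict Implicit. Unset Printing Implicit Defensive.
Import GRing.Theory.
Local Open Scope ring_scope.


Section Lists.
Variable K : fieldType.

Lemma in_cat' (U : Type) (z : U) (l1 l2 : seq U) :
  List.In z (l1 ++ l2) <-> List.In z l1 \/ List.In z l2.
Proof. elim: l1 => [|a l IH] /=; first by tauto. rewrite IH; tauto. Qed.

Lemma in_split' (U : Type) (a : U) (s : seq U) : List.In a s ->
  exists l1 l2, s = l1 ++ a :: l2.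
Proof.
elim: s => [|b s IH] //= [->|/IH [l1 [l2 ->]]]; first by exists [::], s.
by exists (b :: l1), l2.
Qed.

Lemma nodup_mid (U : Type) (a : U) (l1 l2 : seq U) : List.NoDup (l1 ++ a :: l2) ->
  List.NoDup (l1 ++ l2) /\ ~ List.In a (l1 ++ l2).
Proof.
elim: l1 => [|b l IH] /=; first by move/List.NoDup_cons_iff => [? ?]; split.
move/List.NoDup_cons_iff => [nb /IH [H1 H2]]; split.
- constructor => //; move=> /in_cat' h; apply: nb; apply/in_cat'; simpl; tauto.
- move=> [ab|h]; last exact: H2 h.
  subst b; apply: nb; apply/in_cat'; simpl; tauto.
Qed.

Lemma sum_nodup_eq (U : Type) (f : U -> K) (s1 s2 : seq U) :
  List.NoDup s1 -> List.NoDup s2 ->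
  (forall z, List.In z s1 -> f z <> 0 -> List.In z s2) ->
  (forall z, List.In z s2 -> f z <> 0 -> List.In z s1) ->
  \sum_(z <- s1) f z = \sum_(z <- s2) f z.
Proof.
elim: s1 s2 => [|a s1 IH] s2 N1 N2 H12 H21.
- rewrite big_nil; apply/esym.
  elim: s2 N2 H21 {H12} => [|b s IH2] N2 H21; first by rewrite big_nil.
  rewrite big_cons IH2.
  + have [->|fb] := eqVneq (f b) 0; first by rewrite add0r.
    exfalso; apply: (H21 b); [by left | exact/eqP].
  + by move/List.NoDup_cons_iff: N2 => [].
  + by move=> z zs fz; apply: (H21 z) => //; right.
- rewrite big_cons.
  move/List.NoDup_cons_iff: N1 => [na N1].
  have [fa0|fan0] := eqVneq (f a) 0.
  + rewrite fa0 add0r; apply: IH => //.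
    * by move=> z zs fz; apply: H12 => //; right.
    * move=> z zs fz; case: (H21 z zs fz) => // za; subst z; by case: (fz fa0).
  + have [l1 [l2 E]] := in_split' (H12 a (or_introl erefl) ltac:(exact/eqP)).
    subst s2; have [N3 N4] := nodup_mid N2.
    rewrite big_cat /= big_cons [in RHS]addrCA -big_cat; congr (_ + _).
    apply: IH => //.
    * move=> z zs fz; have := H12 z (or_intror zs) fz.
      move/in_cat' => [h|[h|h]]; try (apply/in_cat'; tauto).
      by subst z.
    * move=> z /in_cat' zs fz.
      have : List.In z (l1 ++ a :: l2) by apply/in_cat'; simpl; tauto.
      move=> /H21 /(_ fz) [za|//]; subst z; by case: N4; apply/in_cat'.
Qed.

Definition valid (U : Type) (A : U -> Prop) (f : U -> K) (s : seq U) :=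
  List.NoDup s /\ (forall z, List.In z s -> A z) /\ (forall z, A z -> f z <> 0 -> List.In z s).

Lemma fsum_valid (U : Type) (A : U -> Prop) (f : U -> K) s :
  valid A f s -> fsum A f = \sum_(z <- s) f z.
Proof.
move=> Hv; rewrite /fsum.
set P := (fun s => _).
have : P (epsilon (inhabits [::]) P) by apply: epsilon_spec; exists s.
move: (epsilon _ P) => s' [N' [A' S']].
case: Hv => [N [As S]].
apply: sum_nodup_eq => // z zs fz; [apply: S | apply: S'] => //; [exact: A' | exact: As].
Qed.

Lemma pullback (U V : Type) (g : U -> V) (ginj : forall u v, g u = g v -> u = v)
  (P : U -> Prop) (L : seq V) :
  exists s, List.NoDup s /\ forall w, List.In w s <-> List.In (g w) L /\ P w.
Proof.
elim: L => [|z L [s [N Hs]]]; first by exists [::]; split; [constructor|simpl; tauto].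
case: (classic (exists w, g w = z /\ P w /\ ~ List.In w s)) => [[w [gw [Pw ws]]]|nw].
- exists (w :: s); split; first by constructor.
  move=> w'; simpl; rewrite Hs; split.
  + move=> [<-|[h1 h2]]; [split; [left; by rewrite gw | by []] | tauto].
  + move=> [[e|h] Pw']; last by tauto.
    left; apply: ginj; congruence.
- exists s; split => // w'; simpl; rewrite Hs; split; first tauto.
  move=> [[e|h] Pw']; last by tauto.
  apply/Hs; apply: NNPP => ns; apply: nw; exists w'; by split; [rewrite e | split].
Qed.

Lemma mk_valid (U : Type) (A : U -> Prop) (f : U -> K) (L : seq U) :
  (forall z, A z -> f z <> 0 -> List.In z L) -> exists s, valid A f s.
Proof.
move=> HL; have [s [N Hs]] := pullback (g := id) (fun u v (e : u = v) => e) A L.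
exists s; split => //; split => z; first by move/Hs => [].
by move=> Az fz; apply/Hs; split => //; apply: HL.
Qed.

Lemma fsum_zero (U : Type) (A : U -> Prop) (f : U -> K) :
  (forall z, A z -> f z = 0) -> fsum A f = 0.
Proof.
move=> H; rewrite (@fsum_valid _ _ _ [::]) ?big_nil //.
split; first constructor; split => // z Az; by rewrite H.
Qed.

Lemma fsum_single (U : Type) (A : U -> Prop) (f : U -> K) u :
  A u -> (forall z, A z -> f z <> 0 -> z = u) -> fsum A f = f u.
Proof.
move=> Au H; rewrite (@fsum_valid _ _ _ [:: u]) ?big_cons ?big_nil ?addr0 //.
split; first by constructor => //; constructor.
split; first by move=> z [<-|].
by move=> z Az fz; left; rewrite (H z Az fz).
Qed.

Definition pb (P : Prop) : bool := if excluded_middle_informative P then true else false.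

Lemma pbT (P : Prop) : P -> pb P = true.
Proof. by rewrite /pb; case: excluded_middle_informative. Qed.
Lemma pbF (P : Prop) : ~ P -> pb P = false.
Proof. by rewrite /pb; case: excluded_middle_informative. Qed.

Lemma eq_big_In (U : Type) (s : seq U) (F G : U -> K) :
  (forall z, List.In z s -> F z = G z) -> \sum_(z <- s) F z = \sum_(z <- s) G z.
Proof.
elim: s => [|a s IH] H; first by rewrite !big_nil.
rewrite !big_cons H; last by left.
by rewrite IH // => z zs; apply: H; right.
Qed.

Lemma fsum_cond (U : Type) (A : U -> Prop) (f : U -> K) (L : seq U) :
  List.NoDup L -> (forall z, A z -> f z <> 0 -> List.In z L) ->
  fsum A f = \sum_(z <- L) (if pb (A z) then f z else 0).
Proof.
move=> N HL; have [s [N' [As Ss]]] := mk_valid HL.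
rewrite (@fsum_valid _ _ _ s) //.
rewrite (eq_big_In (G := fun z => if pb (A z) then f z else 0)); last first.
  by move=> z zs; rewrite pbT //; apply: As.
apply: sum_nodup_eq => // z zs.
- by rewrite pbT; [apply: HL; apply: As | apply: As].
- rewrite /pb; case: excluded_middle_informative => // Az fz.
  by apply: Ss.
Qed.

Lemma fsum_ext (U : Type) (A : U -> Prop) (f g : U -> K) :
  (exists s, valid A f s) -> (forall z, A z -> f z = g z) -> fsum A f = fsum A g.
Proof.
move=> [s [N [As Ss]]] H.
rewrite (@fsum_valid _ _ _ s) // (@fsum_valid _ _ g s).
  by apply: eq_big_In => z zs; apply: H; apply: As.
split => //; split => // z Az; rewrite -H //; exact: Ss.
Qed.

End Lists.


Lemma mulnz (K : fieldType) (x y : K) : x * y <> 0 -> x <> 0 /\ y <> 0.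
Proof. by move=> h; split => e; apply: h; rewrite e ?mul0r ?mulr0. Qed.

Section Poset.
Variables (K : fieldType) (T : Type) (le : T -> T -> Prop).
Hypothesis le_refl : forall x, le x x.
Hypothesis le_anti : forall x y, le x y -> le y x -> x = y.
Hypothesis le_trans : forall x y z, le x y -> le y z -> le x z.

Fixpoint ends (s : seq (T * T)) : seq T :=
  if s is p :: s' then p.1 :: p.2 :: ends s' else [::].

Lemma ends_in s u v : List.In (u, v) s -> List.In u (ends s) /\ List.In v (ends s).
Proof.
elim: s => [|[p q] s IH] //= [[-> ->]|/IH]; first tauto. tauto.
Qed.

Lemma supp (a : T -> T -> K) (fa : finitary le a) x y : le x y ->
  exists L, forall u v, le x u -> le u v -> le v y -> a u v <> 0 -> u <> v ->
    List.In u L /\ List.In v L.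
Proof.
move=> xy; case: (classic (x = y)) => [exy|nxy].
- subst y; exists [::] => u v xu uv vx _ []. 
  have ux : u = x by apply: le_anti => //; apply: le_trans uv vx.
  subst u; by apply: le_anti.
- have [s Hs] := fa x y (conj xy nxy).
  exists (ends s) => u v xu uv vy auv nuv; apply: ends_in; apply: Hs => //.
Qed.

Fixpoint pairs (M N : seq T) : seq (T * T) :=
  if M is u :: M' then map (pair u) N ++ pairs M' N else [::].

Lemma in_map_pair (u v : T) N : List.In v N -> List.In (u, v) (map (pair u) N).
Proof. elim: N => [|w N IH] //= [->|/IH]; tauto. Qed.

Lemma pairs_in M N u v : List.In u M -> List.In v N -> List.In (u, v) (pairs M N).
Proof.
elim: M => [|w M IH] //= [->|/IH h] vN; apply/in_cat'; first by left; apply: in_map_pair.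
by right; apply: h.
Qed.

Notation A x y := (fun z => le x z /\ le z y).

Lemma conv_valid (a b : T -> T -> K) (fa : finitary le a) x y : le x y ->
  exists s, valid (A x y) (fun z => a x z * b z y) s.
Proof.
move=> xy; have [L HL] := supp fa xy.
apply: (@mk_valid _ _ _ _ (x :: L)) => z [xz zy] /mulnz [az _].
case: (classic (x = z)) => [->|nxz]; first by left.
right; by have [] := HL x z (le_refl x) xz zy az nxz.
Qed.

Lemma conv_congr (a a' b b' : T -> T -> K) : finitary le a ->
  ieq le a a' -> ieq le b b' -> ieq le (conv le a b) (conv le a' b').
Proof.
move=> fa ea eb x y xy; rewrite /conv; apply: fsum_ext; first exact: conv_valid.
by move=> z [xz zy]; rewrite ea // eb.
Qed.

Lemma conv_fin (a b : T -> T -> K) : finitary le a -> finitary le b ->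
  finitary le (conv le a b).
Proof.
move=> fa fb x y [xy nxy].
have [La HLa] := supp fa xy; have [Lb HLb] := supp fb xy.
exists (pairs (La ++ Lb) (La ++ Lb)) => u v xu [uv nuv] vy cuv.
have [z [[uz zv] tz]] : exists z, (le u z /\ le z v) /\ a u z * b z v <> 0.
  apply: NNPP => nz; apply: cuv; apply: fsum_zero => z Az.
  by apply: NNPP => h; apply: nz; exists z.
have [az bz] := mulnz tz.
have yv : le z y by apply: le_trans vy.
have xz : le x z by apply: le_trans uz.
apply: pairs_in; apply/in_cat'.
- case: (classic (u = z)) => [euz|nuz].
  + subst z; right; by have [] := HLb u v xu uv vy bz nuv.
  + left; by have [] := HLa u z xu uz yv az nuz.
- case: (classic (z = v)) => [ezv|nzv].
  + subst z; left; by have [] := HLa u v xu uv vy az nuv.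
  + right; by have [] := HLb z v xz zv vy bz nzv.
Qed.


Lemma nodup_list (L0 : seq T) : exists L, List.NoDup L /\ forall z, List.In z L <-> List.In z L0.
Proof.
have [L [N H]] := pullback (g := id) (fun u v (e : u = v) => e) (fun _ => True) L0.
exists L; split => // z; rewrite H; tauto.
Qed.

Lemma conv_assoc (a b c : T -> T -> K) : finitary le a -> finitary le b -> finitary le c ->
  ieq le (conv le (conv le a b) c) (conv le a (conv le b c)).
Proof.
move=> fa fb fc x y xy.
have [La HLa] := supp fa xy; have [Lc HLc] := supp fc xy.
have [L [N HL]] := nodup_list (x :: y :: La ++ Lc).
have inLa z : List.In z La -> List.In z L.
  by move=> h; apply/HL; right; right; apply/in_cat'; left.
have inLc z : List.In z Lc -> List.In z L.
  by move=> h; apply/HL; right; right; apply/in_cat'; right.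
have xL : List.In x L by apply/HL; left.
have yL : List.In y L by apply/HL; right; left.
rewrite /conv.
rewrite (@fsum_cond _ _ _ _ L N); last first.
  move=> z [xz zy] /mulnz [_ cz]; case: (classic (z = y)) => [->//|nzy].
  by apply: inLc; have [] := HLc z y xz zy (le_refl y) cz nzy.
rewrite [RHS](@fsum_cond _ _ _ _ L N); last first.
  move=> z [xz zy] /mulnz [az _]; case: (classic (x = z)) => [<-//|nxz].
  by apply: inLa; have [] := HLa x z (le_refl x) xz zy az nxz.
transitivity (\sum_(z <- L) \sum_(w <- L)
   (if pb ((le x z /\ le z y) /\ (le x w /\ le w z)) then a x w * b w z * c z y else 0)).
  apply: eq_bigr => z _; case: (classic (le x z /\ le z y)) => [[xz zy]|nz].
  + rewrite pbT //.
    rewrite (@fsum_cond _ _ _ _ L N); last first.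
      move=> w [xw wz] /mulnz [aw _]; case: (classic (x = w)) => [<-//|nxw].
      by apply: inLa; have [] := HLa x w (le_refl x) xw (le_trans wz zy) aw nxw.
    rewrite mulr_suml; apply: eq_bigr => w _.
    case: (classic (le x w /\ le w z)) => h.
    * by rewrite !pbT.
    * by rewrite !pbF ?mul0r //; tauto.
  + rewrite pbF // big1 // => w _; rewrite pbF //; tauto.
rewrite exchange_big /=.
apply: eq_bigr => w _; case: (classic (le x w /\ le w y)) => [[xw wy]|nw].
- rewrite pbT //.
  rewrite (@fsum_cond _ _ _ _ L N); last first.
    move=> z [wz zy] /mulnz [_ cz]; case: (classic (z = y)) => [->//|nzy].
    by apply: inLc; have [] := HLc z y (le_trans xw wz) zy (le_refl y) cz nzy.
  rewrite mulr_sumr; apply: eq_bigr => z _.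
  case: (classic (le w z /\ le z y)) => [[wz zy]|h].
  + rewrite !pbT ?mulrA //; split; [split => //; exact: le_trans wz|by []].
  + rewrite !pbF ?mulr0 // => [[[xz zy] [_ wz]]]; by apply: h.
- rewrite pbF // big1 // => z _; rewrite pbF // => [[[xz zy] [xw wz]]].
  apply: nw; split => //; exact: le_trans zy.
Qed.


Lemma fi_one_eq x : @fi_one K T x x = 1.
Proof. by rewrite /fi_one; case: (excluded_middle_informative (x = x)). Qed.

Lemma fi_one_neq x y : x <> y -> @fi_one K T x y = 0.
Proof. by rewrite /fi_one; case: (excluded_middle_informative (x = y)). Qed.

Lemma fi_one_nz x y : @fi_one K T x y <> 0 -> x = y.
Proof. by move=> h; apply: NNPP => /fi_one_neq. Qed.

Lemma fi_one_fin : finitary le (@fi_one K T).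
Proof.
by move=> x y _; exists [::] => u v _ [_ nuv] _; rewrite fi_one_neq.
Qed.

Lemma fi_zero_fin : finitary le (@fi_zero K T).
Proof. by move=> x y _; exists [::] => u v _ _ _; rewrite /fi_zero. Qed.

Lemma conv_1l (a : T -> T -> K) : ieq le (conv le (@fi_one K T) a) a.
Proof.
move=> x y xy; rewrite /conv (@fsum_single _ _ _ _ x).
- by rewrite fi_one_eq mul1r.
- by split.
- by move=> z _ /mulnz [/fi_one_nz h _].
Qed.

Lemma conv_1r (a : T -> T -> K) : ieq le (conv le a (@fi_one K T)) a.
Proof.
move=> x y xy; rewrite /conv (@fsum_single _ _ _ _ y).
- by rewrite fi_one_eq mulr1.
- by split.
- by move=> z _ /mulnz [_ /fi_one_nz h].
Qed.

Lemma conv_0l (a b : T -> T -> K) : ieq le a (@fi_zero K T) -> ieq le (conv le a b) (@fi_zero K T).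
Proof.
move=> h x y xy; rewrite /conv /fi_zero; apply: fsum_zero => z [xz zy].
by rewrite h // /fi_zero mul0r.
Qed.

Lemma conv_0r (a b : T -> T -> K) : ieq le b (@fi_zero K T) -> ieq le (conv le a b) (@fi_zero K T).
Proof.
move=> h x y xy; rewrite /conv /fi_zero; apply: fsum_zero => z [xz zy].
by rewrite h // /fi_zero mulr0.
Qed.

Definition fadd (a b : T -> T -> K) : T -> T -> K := fun x y => a x y + b x y.
Definition fopp (a : T -> T -> K) : T -> T -> K := fun x y => - a x y.

Lemma fadd_fin a b : finitary le a -> finitary le b -> finitary le (fadd a b).
Proof.
move=> fa fb x y h; have [sa Ha] := fa x y h; have [sb Hb] := fb x y h.
exists (sa ++ sb) => u v xu uv vy; rewrite /fadd => nz; apply/in_cat'.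
case: (classic (a u v = 0)) => ha.
- right; apply: Hb => // hb; apply: nz; by rewrite ha hb addr0.
- by left; apply: Ha.
Qed.

Lemma fopp_fin a : finitary le a -> finitary le (fopp a).
Proof.
move=> fa x y h; have [sa Ha] := fa x y h.
exists sa => u v xu uv vy; rewrite /fopp => nz; apply: Ha => // e; apply: nz.
by rewrite e oppr0.
Qed.

Lemma conv_Dl (a b c : T -> T -> K) : finitary le a -> finitary le b ->
  ieq le (conv le (fadd a b) c) (fadd (conv le a c) (conv le b c)).
Proof.
move=> fa fb x y xy.
have [La HLa] := supp fa xy; have [Lb HLb] := supp fb xy.
have [L [N HL]] := nodup_list (x :: La ++ Lb).
have key (d : T -> T -> K) (Ld : seq T) : (forall z, List.In z Ld -> List.In z L) ->
  (forall u v, le x u -> le u v -> le v y -> d u v <> 0 -> u <> v ->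
      List.In u Ld /\ List.In v Ld) ->
  forall z, le x z /\ le z y -> d x z * c z y <> 0 -> List.In z L.
  move=> sub Hd z [xz zy] /mulnz [dz _]; case: (classic (x = z)) => [<-|nxz].
    by apply/HL; left.
  by apply: sub; have [] := Hd x z (le_refl x) xz zy dz nxz.
have subA z : List.In z La -> List.In z L.
  by move=> h; apply/HL; right; apply/in_cat'; left.
have subB z : List.In z Lb -> List.In z L.
  by move=> h; apply/HL; right; apply/in_cat'; right.
rewrite /conv /fadd (@fsum_cond _ _ _ _ L N); last first.
  move=> z Az nz; have [_ cz] := mulnz nz; case: (classic (a x z = 0)) => ha.
  - move: nz; rewrite ha add0r; exact: (key b Lb subB HLb).
  - apply: (key a La subA HLa z Az); by apply/eqP; apply: mulf_neq0; apply/eqP.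
rewrite (@fsum_cond _ _ _ _ L N); last exact: (key a La subA HLa).
rewrite (@fsum_cond _ _ _ (fun z => b x z * c z y) L N); last exact: (key b Lb subB HLb).
rewrite -big_split /=; apply: eq_bigr => z _.
by case: pb; rewrite ?mulrDl ?addr0.
Qed.


Lemma left_list (a : T -> T -> K) (fa : finitary le a) x y : le x y ->
  exists L, List.NoDup L /\ forall z (k : K), le x z /\ le z y ->
     a x z * k <> 0 -> List.In z L.
Proof.
move=> xy; have [La HLa] := supp fa xy.
have [L [N HL]] := nodup_list (x :: La).
exists L; split => // z k [xz zy] /mulnz [az _]; apply/HL.
case: (classic (x = z)) => [<-|nxz]; first by left.
by right; have [] := HLa x z (le_refl x) xz zy az nxz.
Qed.

Lemma conv_Dr (a b c : T -> T -> K) : finitary le a ->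
  ieq le (conv le a (fadd b c)) (fadd (conv le a b) (conv le a c)).
Proof.
move=> fa x y xy; have [L [N HL]] := left_list fa xy.
rewrite /conv /fadd (@fsum_cond _ _ _ _ L N); last by move=> z Az; apply: HL.
rewrite (@fsum_cond _ _ _ _ L N); last by move=> z Az; apply: HL.
rewrite (@fsum_cond _ _ _ (fun z => a x z * c z y) L N); last by move=> z Az; apply: HL.
rewrite -big_split /=; apply: eq_bigr => z _.
by case: pb; rewrite ?mulrDr ?addr0.
Qed.

Lemma conv_Nl (a b : T -> T -> K) : finitary le a ->
  ieq le (conv le (fopp a) b) (fopp (conv le a b)).
Proof.
move=> fa x y xy; have [L [N HL]] := left_list fa xy.
rewrite /conv /fopp (@fsum_cond _ _ _ _ L N); last first.
  move=> z Az h; apply: (HL z (- b z y)) => //; by rewrite mulrN -mulNr.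
rewrite (@fsum_cond _ _ _ _ L N); last by move=> z Az; apply: HL.
rewrite -sumrN; apply: eq_bigr => z _.
by case: pb; rewrite ?mulNr ?oppr0.
Qed.

Lemma conv_Nr (a b : T -> T -> K) : finitary le a ->
  ieq le (conv le a (fopp b)) (fopp (conv le a b)).
Proof.
move=> fa x y xy; have [L [N HL]] := left_list fa xy.
rewrite /conv /fopp (@fsum_cond _ _ _ _ L N); last by move=> z Az; apply: HL.
rewrite (@fsum_cond _ _ _ _ L N); last by move=> z Az; apply: HL.
rewrite -sumrN; apply: eq_bigr => z _.
by case: pb; rewrite ?mulrN ?oppr0.
Qed.


Record FE := mkFE { fe :> T -> T -> K; fe_fin : finitary le fe }.
Definition eqv (a b : FE) := ieq le a b.
Definition mulF (a b : FE) : FE := mkFE (conv_fin (fe_fin a) (fe_fin b)).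
Definition addF (a b : FE) : FE := mkFE (fadd_fin (fe_fin a) (fe_fin b)).
Definition oppF (a : FE) : FE := mkFE (fopp_fin (fe_fin a)).
Definition subF (a b : FE) : FE := addF a (oppF b).
Definition oneF : FE := mkFE fi_one_fin.
Definition zeroF : FE := mkFE fi_zero_fin.

Lemma eqv_refl a : eqv a a. Proof. by []. Qed.
Lemma eqv_sym a b : eqv a b -> eqv b a. Proof. by move=> h x y xy; rewrite h. Qed.
Lemma eqv_trans a b c : eqv a b -> eqv b c -> eqv a c.
Proof. by move=> h1 h2 x y xy; rewrite h1 // h2. Qed.

Add Parametric Relation : FE eqv
  reflexivity proved by eqv_refl
  symmetry proved by eqv_sym
  transitivity proved by eqv_trans as eqv_rel.

Add Parametric Morphism : mulF with signature eqv ==> eqv ==> eqv as mulF_m.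
Proof. by move=> a a' ea b b' eb; apply: conv_congr => //; exact: fe_fin. Qed.
Add Parametric Morphism : addF with signature eqv ==> eqv ==> eqv as addF_m.
Proof. by move=> a a' ea b b' eb x y xy; rewrite /= /fadd ea // eb. Qed.
Add Parametric Morphism : oppF with signature eqv ==> eqv as oppF_m.
Proof. by move=> a a' ea x y xy; rewrite /= /fopp ea. Qed.
Add Parametric Morphism : subF with signature eqv ==> eqv ==> eqv as subF_m.
Proof. by move=> a a' ea b b' eb; rewrite /subF ea eb. Qed.

Lemma mulAF a b c : eqv (mulF (mulF a b) c) (mulF a (mulF b c)).
Proof. apply: conv_assoc; exact: fe_fin. Qed.
Lemma mul1lF a : eqv (mulF oneF a) a. Proof. exact: conv_1l. Qed.
Lemma mul1rF a : eqv (mulF a oneF) a. Proof. exact: conv_1r. Qed.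
Lemma mul0lF a : eqv (mulF zeroF a) zeroF. Proof. exact: conv_0l. Qed.
Lemma mul0rF a : eqv (mulF a zeroF) zeroF. Proof. exact: conv_0r. Qed.
Lemma mulDlF a b c : eqv (mulF (addF a b) c) (addF (mulF a c) (mulF b c)).
Proof. apply: conv_Dl; exact: fe_fin. Qed.
Lemma mulDrF a b c : eqv (mulF a (addF b c)) (addF (mulF a b) (mulF a c)).
Proof. apply: conv_Dr; exact: fe_fin. Qed.
Lemma mulNlF a c : eqv (mulF (oppF a) c) (oppF (mulF a c)).
Proof. apply: conv_Nl; exact: fe_fin. Qed.
Lemma mulNrF a c : eqv (mulF a (oppF c)) (oppF (mulF a c)).
Proof. apply: conv_Nr; exact: fe_fin. Qed.
Lemma mulBlF a b c : eqv (mulF (subF a b) c) (subF (mulF a c) (mulF b c)).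
Proof. by rewrite /subF mulDlF mulNlF. Qed.
Lemma mulBrF a b c : eqv (mulF a (subF b c)) (subF (mulF a b) (mulF a c)).
Proof. by rewrite /subF mulDrF mulNrF. Qed.
Lemma subrrF a : eqv (subF a a) zeroF.
Proof. by move=> x y xy; rewrite /= /fadd /fopp /fi_zero GRing.subrr. Qed.
Lemma addr0F a : eqv (addF a zeroF) a.
Proof. by move=> x y xy; rewrite /= /fadd /fi_zero addr0. Qed.
Lemma add0rF a : eqv (addF zeroF a) a.
Proof. by move=> x y xy; rewrite /= /fadd /fi_zero add0r. Qed.
Lemma sub0rF a : eqv (subF a zeroF) a.
Proof. by move=> x y xy; rewrite /= /fadd /fopp /fi_zero oppr0 addr0. Qed.
Lemma subr0_eq a b : eqv (subF a b) zeroF -> eqv a b.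
Proof.
move=> h x y xy; have := h x y xy; rewrite /= /fadd /fopp /fi_zero.
by move/eqP; rewrite subr_eq0 => /eqP.
Qed.
Lemma addI_eq0 b d : eqv (addF b d) b -> eqv d zeroF.
Proof.
move=> h x y xy; have := h x y xy; rewrite /= /fadd /fi_zero.
by move=> e; apply: (addrI (b x y)); rewrite addr0.
Qed.

Section SR.
Variables (a b : FE).
Hypothesis H1 : eqv (mulF (mulF a b) a) a.
Hypothesis H2 : eqv (mulF (mulF b a) b) b.

Let s := subF oneF (mulF a b).
Let s' := subF oneF (mulF b a).

Lemma P1 : eqv (mulF s a) zeroF.
Proof. by rewrite /s mulBlF mul1lF H1 subrrF. Qed.
Lemma P2 : eqv (mulF a s') zeroF.
Proof. by rewrite /s' mulBrF mul1rF -mulAF H1 subrrF. Qed.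
Lemma P4 : eqv (mulF (mulF b a) s') zeroF.
Proof. by rewrite /s' mulBrF mul1rF -mulAF H2 subrrF. Qed.
Lemma Q1 X : eqv (mulF (mulF X s) a) zeroF.
Proof. by rewrite mulAF P1 mul0rF. Qed.
Lemma Q3 X : eqv (mulF (mulF (mulF X a) b) a) (mulF X a).
Proof. by rewrite !mulAF -(mulAF a b a) H1. Qed.
Lemma Q4 X : eqv (mulF (mulF X a) s') zeroF.
Proof. by rewrite mulAF P2 mul0rF. Qed.

Lemma pert (d : FE) : eqv (mulF (mulF a d) a) zeroF ->
  eqv (addF (mulF (mulF b a) d) (addF (mulF (mulF d a) b) (mulF (mulF d a) d))) d ->
  eqv (mulF (mulF a (addF b d)) a) a /\
  eqv (mulF (mulF (addF b d) a) (addF b d)) (addF b d).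
Proof.
move=> h1 h2; split.
- by rewrite mulDrF mulDlF H1 h1 addr0F.
- rewrite mulDlF mulDlF !mulDrF H2.
  transitivity (addF b (addF (mulF (mulF b a) d) (addF (mulF (mulF d a) b) (mulF (mulF d a) d)))).
    move=> x y xy; rewrite /= /fadd; by rewrite -!addrA.
  by rewrite h2.
Qed.


Hypothesis U : forall c : FE, eqv (mulF (mulF a c) a) a ->
  eqv (mulF (mulF c a) c) c -> eqv c b.

Lemma E1 x : eqv (mulF (mulF b a) x) (mulF (mulF (mulF b a) x) (mulF a b)).
Proof.
set d1 := mulF (mulF (mulF b a) x) s.
have [h1 h2] : eqv (mulF (mulF a (addF b d1)) a) a /\
  eqv (mulF (mulF (addF b d1) a) (addF b d1)) (addF b d1).
  apply: pert; rewrite /d1; first by rewrite -!mulAF Q1.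
  by rewrite -!mulAF H2 !Q1 !mul0lF add0rF addr0F.
have := addI_eq0 (U h1 h2); rewrite /d1 /s mulBrF mul1rF.
by move/subr0_eq.
Qed.

Lemma E2 x : eqv (mulF x (mulF a b)) (mulF (mulF (mulF b a) x) (mulF a b)).
Proof.
set d2 := mulF (mulF (mulF s' x) a) b.
have [h1 h2] : eqv (mulF (mulF a (addF b d2)) a) a /\
  eqv (mulF (mulF (addF b d2) a) (addF b d2)) (addF b d2).
  apply: pert; rewrite /d2; first by rewrite -!mulAF P2 !mul0lF.
  by rewrite -!mulAF P4 !Q3 Q4 !mul0lF add0rF addr0F.
have := addI_eq0 (U h1 h2); rewrite /d2 /s' mulAF mulBlF mul1lF mulBlF.
by move/subr0_eq.
Qed.

Lemma sr_idem : eqv (mulF (mulF a b) (mulF a b)) (mulF a b).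
Proof. by rewrite -mulAF H1. Qed.

Lemma sr_comm : eqv (mulF a b) (mulF b a) /\
  forall x, eqv (mulF (mulF a b) x) (mulF x (mulF a b)).
Proof.
have e : eqv (mulF a b) (mulF b a).
  have h1 := E1 oneF; have h2 := E2 oneF.
  rewrite mul1rF in h1; rewrite mul1lF mul1rF in h2.
  by rewrite h2 -h1.
split => // x; by rewrite e E1 -E2 e.
Qed.

End SR.

Lemma inv_unique (a g c : FE) : eqv (mulF a g) oneF -> eqv (mulF g a) oneF ->
  eqv (mulF (mulF a c) a) a -> eqv (mulF (mulF c a) c) c -> eqv c g.
Proof.
move=> hag hga h1 h2.
transitivity (mulF (mulF (mulF g a) c) (mulF a g)).
  by rewrite hga hag mul1lF mul1rF.
transitivity (mulF g (mulF (mulF (mulF a c) a) g)); first by rewrite !mulAF.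
by rewrite h1 hag mul1rF.
Qed.

Lemma diag_mul (e f : FE) u : mulF e f u u = e u u * f u u.
Proof.
rewrite /= /conv (@fsum_single _ _ _ _ u) //.
by move=> z [uz zu] _; apply: le_anti.
Qed.

Definition delta (p q : T) : T -> T -> K := fun u v => if pb (u = p /\ v = q) then 1 else 0.

Lemma delta_eq p q : delta p q p q = 1.
Proof. by rewrite /delta pbT. Qed.
Lemma delta_nz p q u v : delta p q u v <> 0 -> u = p /\ v = q.
Proof. rewrite /delta => h; apply: NNPP => h'; apply: h; by rewrite pbF. Qed.

Lemma delta_fin p q : finitary le (delta p q).
Proof.
move=> x y _; exists [:: (p, q)] => u v _ _ _ /delta_nz [-> ->]; by left.
Qed.

Definition deltaF p q : FE := mkFE (delta_fin p q).

Lemma central_offdiag (e : FE) : (forall x, eqv (mulF e x) (mulF x e)) ->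
  forall p u, le p u -> p <> u -> e p u = 0.
Proof.
move=> C p u pu npu; have := C (deltaF u u) p u pu; rewrite /= /conv.
rewrite (@fsum_single _ _ _ _ u); first last.
- by move=> z _ /mulnz [_ /delta_nz []].
- by split.
rewrite delta_eq GRing.mulr1 => ->; apply: fsum_zero => z _.
case: (classic (delta u u p z = 0)) => [->|/delta_nz [] //]; by rewrite GRing.mul0r.
Qed.

Lemma central_diag (e : FE) : (forall x, eqv (mulF e x) (mulF x e)) ->
  forall u v, le u v -> e u u = e v v.
Proof.
move=> C u v uv; have := C (deltaF u v) u v uv; rewrite /= /conv.
rewrite (@fsum_single _ _ _ _ u); first last.
- by move=> z _ /mulnz [_ /delta_nz []].
- by split.
rewrite (@fsum_single _ _ _ _ v); first last.
- by move=> z _ /mulnz [/delta_nz [] _ ->].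
- by split.
by rewrite !delta_eq GRing.mulr1 GRing.mul1r.
Qed.

End Poset.

Lemma eqv_mul (K : fieldType) (T : Type) (le : T -> T -> Prop) (lr : forall x, le x x) la lt
  (a a' b b' : FE K le) : eqv a a' -> eqv b b' -> eqv (mulF la lt a b) (mulF la lt a' b').
Proof. move=> ea eb; apply: conv_congr => //; exact: fe_fin. Qed.


Lemma in_map' (U V : Type) (g : U -> V) (s : seq U) z :
  List.In z (map g s) <-> exists w, g w = z /\ List.In w s.
Proof.
elim: s => [|w s IH] /=; first by split => // [[w []]].
rewrite IH; split.
- move=> [<-|[w' [e h]]]; [by exists w; split; [|left] | by exists w'; split; [|right]].
- move=> [w' [e [ew|h]]]; [by subst; left | by right; exists w'].
Qed.

Lemma nodup_map' (U V : Type) (g : U -> V) (ginj : forall u v, g u = g v -> u = v)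
  (s : seq U) : List.NoDup s -> List.NoDup (map g s).
Proof.
elim: s => [|w s IH] /=; first by constructor.
move/List.NoDup_cons_iff => [nw N]; constructor; last exact: IH.
by move/in_map' => [w' [/ginj e h]]; subst w'.
Qed.

Section Comp.
Variables (K : fieldType) (T : Type) (le : T -> T -> Prop).
Hypothesis le_refl : forall x, le x x.
Hypothesis le_anti : forall x y, le x y -> le y x -> x = y.
Hypothesis le_trans : forall x y z, le x y -> le y z -> le x z.
Variable r : T.
Notation C := (component le r).
Notation cle := (@comp_le T le r).

Lemma val_inj (X Y : C) : proj1_sig X = proj1_sig Y -> X = Y.
Proof.
case: X => x hx; case: Y => y hy /= e; subst y; f_equal; exact: proof_irrelevance.
Qed.

Lemma cle_refl X : cle X X. Proof. exact: le_refl. Qed.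
Lemma cle_anti X Y : cle X Y -> cle Y X -> X = Y.
Proof. by move=> h1 h2; apply: val_inj; apply: le_anti. Qed.
Lemma cle_trans X Y Z : cle X Y -> cle Y Z -> cle X Z.
Proof. exact: le_trans. Qed.

Lemma conn_le x z : connected le r x -> le x z -> connected le r z.
Proof. move=> h xz; apply: rst_trans h _; apply: rst_step; by left. Qed.
Lemma conn_ge x z : connected le r x -> le z x -> connected le r z.
Proof. move=> h xz; apply: rst_trans h _; apply: rst_step; by right. Qed.

Lemma restrict_fin (a : T -> T -> K) : finitary le a -> finitary cle (restrict a).
Proof.
move=> fa X Y [XY nXY].
have nxy : proj1_sig X <> proj1_sig Y by move/val_inj.
have [s Hs] := fa _ _ (conj XY nxy).
have ginj : forall P Q : C * C, (proj1_sig P.1, proj1_sig P.2) = (proj1_sig Q.1, proj1_sig Q.2) -> P = Q.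
  by move=> [P1 P2] [Q1 Q2] /= [/val_inj -> /val_inj ->].
have [sC [_ HC]] := pullback ginj (fun _ => True) s.
exists sC => U V XU [UV nUV] VY h; apply/HC; split => //=.
apply: Hs => //; split => // /val_inj; exact: nUV.
Qed.

Lemma transfer (a c : T -> T -> K) : finitary le a -> forall X Y, cle X Y ->
  conv cle (restrict a) (restrict c) X Y = conv le a c (proj1_sig X) (proj1_sig Y).
Proof.
move=> fa X Y XY.
have [s [N [As Ss]]] := conv_valid le_refl le_anti le_trans c fa XY.
have [sC [NC HC]] := pullback (@val_inj) (fun _ => True) s.
rewrite /conv (@fsum_valid _ _ _ _ sC); last first.
  split => //; split.
  - by move=> W /HC [/As].
  - by move=> W AW h; apply/HC; split => //; apply: Ss.
rewrite (@fsum_valid _ _ _ _ (map (@proj1_sig _ _) sC)); first by rewrite big_map.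
split; first exact: (nodup_map' (@val_inj) NC).
split.
- by move=> z /in_map' [W [<- /HC [/As]]].
- move=> z [xz zy] h; apply/in_map'.
  have cz : connected le r z by apply: conn_le (proj2_sig X) xz.
  exists (exist _ z cz); split => //; apply/HC; split => //; exact: Ss.
Qed.


Definition rF (u : T -> T -> K) (fu : finitary le u) : FE K cle := mkFE (restrict_fin fu).

Lemma rF_mul u v (fu : finitary le u) (fv : finitary le v) (h : finitary le (conv le u v)) :
  eqv (rF h) (mulF cle_anti cle_trans (rF fu) (rF fv)).
Proof. move=> X Y XY; exact: (esym (transfer v fu XY)). Qed.

Lemma dir1 (alpha : T -> T -> K) (halpha : finitary le alpha) :
  fi_superregular le alpha ->
  ieq cle (restrict alpha) (@fi_zero K C) \/ fi_invertible cle (restrict alpha).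
Proof.
move=> [_ [b [fb [H1 [H2 U]]]]].
pose aF := mkFE halpha; pose bF := mkFE fb.
have [eab Cm] := @sr_comm K T le le_refl le_anti le_trans aF bF H1 H2
   (fun c h1 h2 => U c (fe_fin c) h1 h2).
have off : forall p u, le p u -> p <> u -> conv le alpha b p u = 0 :=
  central_offdiag le_refl Cm.
have diag : forall u v, le u v -> conv le alpha b u u = conv le alpha b v v :=
  central_diag le_refl Cm.
have idem := @sr_idem K T le le_refl le_anti le_trans aF bF H1.
have cst : forall z, connected le r z -> conv le alpha b z z = conv le alpha b r r.
  rewrite /connected => z0 h; elim: h => [x y [xy|yx]|x|x y _ IH|x y z _ IH1 _ IH2] //.
  - by rewrite (diag _ _ xy).
  - by rewrite (diag _ _ yx).
  - by rewrite IH2 IH1.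
have e2 : conv le alpha b r r * conv le alpha b r r = conv le alpha b r r.
  by have := idem r r (le_refl r); rewrite diag_mul.
set c := conv le alpha b r r in cst e2.
have : c * (c - 1) = 0 by rewrite mulrBr mulr1 e2 subrr.
move/eqP; rewrite mulf_eq0 subr_eq0 => /orP [/eqP c0|/eqP c1].
- left => X Y XY; rewrite /restrict /fi_zero -(H1 _ _ XY).
  apply: fsum_zero => z [xz zy].
  case: (classic (proj1_sig X = z)) => [<-|nxz].
  + by rewrite cst ?c0 ?mul0r //; exact: (proj2_sig X).
  + by rewrite off ?mul0r.
- have E : forall X Y : C, cle X Y -> conv le alpha b (proj1_sig X) (proj1_sig Y) = fi_one K X Y.
    move=> X Y XY; case: (classic (X = Y)) => [<-|nXY].
    + by rewrite fi_one_eq cst ?c1 //; exact: (proj2_sig X).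
    + rewrite fi_one_neq // off //; by move/val_inj.
  right; exists (restrict b); split; first exact: restrict_fin.
  split => X Y XY; rewrite transfer //; first exact: E.
  by move: (eab _ _ XY) => /= <-; exact: E.
Qed.

End Comp.

Section Main.
Variables (K : fieldType) (T : Type) (le : T -> T -> Prop).
Hypothesis le_refl : forall x, le x x.
Hypothesis le_anti : forall x y, le x y -> le y x -> x = y.
Hypothesis le_trans : forall x y z, le x y -> le y z -> le x z.
Variables (alpha : T -> T -> K) (halpha : finitary le alpha).
Hypothesis H : forall x0 : T,
  ieq (@comp_le T le x0) (restrict alpha) (@fi_zero K (component le x0)) \/
  fi_invertible (@comp_le T le x0) (restrict alpha).

Definition rep x := epsilon (inhabits x) (connected le x).

Lemma rep_conn x : connected le x (rep x).
Proof. apply: epsilon_spec; exists x; exact: rst_refl. Qed.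

Lemma rep_eq x y : connected le x y -> rep x = rep y.
Proof.
move=> h; have E : connected le x = connected le y.
  apply: functional_extensionality => z; apply: propositional_extensionality.
  split => hh; [eapply rst_trans; [apply: rst_sym; exact: h | exact: hh] | eapply rst_trans; [exact: h | exact: hh]].
rewrite /rep E; f_equal; exact: proof_irrelevance.
Qed.

Definition Q (R : T) (gg : component le R -> component le R -> K) :=
  finitary (@comp_le T le R) gg /\
  ((ieq (@comp_le T le R) (restrict alpha) (@fi_zero K _) /\
    ieq (@comp_le T le R) gg (@fi_zero K _)) \/
   (ieq (@comp_le T le R) (conv (@comp_le T le R) (restrict alpha) gg) (@fi_one K _) /\
    ieq (@comp_le T le R) (conv (@comp_le T le R) gg (restrict alpha)) (@fi_one K _))).

Lemma exQ R : exists gg, @Q R gg.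
Proof.
case: (H R) => [h|[gg [fg [h1 h2]]]].
- exists (@fi_zero K _); split; first exact: fi_zero_fin.
  by left.
- by exists gg; split => //; right.
Qed.

Definition g R := proj1_sig (constructive_indefinite_description _ (exQ R)).
Lemma gQ R : @Q R (@g R).
Proof. exact: proj2_sig. Qed.

Definition G (R x y : T) : K :=
  match excluded_middle_informative (connected le R x) with
  | left hx => match excluded_middle_informative (connected le R y) with
     | left hy => g (exist _ x hx) (exist _ y hy)
     | right _ => 0 end
  | right _ => 0 end.

Definition bb x y := G (rep x) x y.

Lemma view r (X Y : component le (rep r)) :
  bb (proj1_sig X) (proj1_sig Y) = g X Y.
Proof.
have e : rep (proj1_sig X) = rep r.
  apply/esym/rep_eq; apply: rst_trans (rep_conn r) (proj2_sig X).
rewrite /bb e /G.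
case: excluded_middle_informative => [hx|nx]; last by case: nx; exact: (proj2_sig X).
case: excluded_middle_informative => [hy|ny]; last by case: ny; exact: (proj2_sig Y).
by congr (g _ _); apply: val_inj.
Qed.


Add Parametric Relation (U : Type) (lu : U -> U -> Prop) : (FE K lu) (@eqv K U lu)
  reflexivity proved by (@eqv_refl K U lu)
  symmetry proved by (@eqv_sym K U lu)
  transitivity proved by (@eqv_trans K U lu) as eqvR.

Notation cl R := (@comp_le T le R).
Notation mC R := (@mulF K (component le R) (@comp_le T le R)
   (@cle_anti T le le_anti R) (@cle_trans T le le_trans R)).

Add Parametric Morphism (R : T) : (mC R) with signature
  (@eqv K _ (cl R)) ==> (@eqv K _ (cl R)) ==> (@eqv K _ (cl R)) as mC_m.
Proof. move=> a a' ea b b' eb; exact: (@eqv_mul K _ _ (@cle_refl T le le_refl R) _ _ _ _ _ _ ea eb). Qed.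

Lemma fin_bb : finitary le bb.
Proof.
move=> x y [xy nxy].
pose Xp : component le (rep x) := exist _ x (rst_sym _ _ _ _ (rep_conn x)).
pose Yp : component le (rep x) := exist _ y (conn_le (proj2_sig Xp) xy).
have [fg _] := gQ (rep x).
have [sC Hs] := fg Xp Yp (conj xy (fun e : Xp = Yp => nxy (f_equal (@proj1_sig _ _) e))).
exists (map (fun P => (proj1_sig P.1, proj1_sig P.2)) sC) => u v xu [uv nuv] vy h.
pose U : component le (rep x) := exist _ u (conn_le (proj2_sig Xp) xu).
pose V : component le (rep x) := exist _ v (conn_le (proj2_sig Xp) (le_trans xu uv)).
have hv : bb u v = g U V := view U V.
apply/in_map'; exists (U, V); split => //.
apply: Hs => //; first split => //.
- by move=> e; apply: nuv; rewrite -[u]/(proj1_sig U) e.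
- by rewrite -hv.
Qed.

Definition gF R : FE K (cl R) := mkFE (proj1 (gQ R)).
Definition aR R : FE K (cl R) := rF R halpha.

Lemma bR_eq x : eqv (rF (rep x) fin_bb) (gF (rep x)).
Proof. move=> X Y _; exact: view X Y. Qed.

Notation Xp x := (exist (connected le (rep x)) x (rst_sym _ _ _ _ (rep_conn x)) : component le (rep x)).

Lemma aba : ieq le (conv le (conv le alpha bb) alpha) alpha.
Proof.
move=> x y xy.
pose Yp : component le (rep x) := exist _ y (conn_le (proj2_sig (Xp x)) xy).
have XY : cl (rep x) (Xp x) Yp := xy.
have fab := conv_fin le_anti le_trans halpha fin_bb.
have faba := conv_fin le_anti le_trans fab halpha.
have E : eqv (rF (rep x) faba) (mC (rep x) (mC (rep x) (aR (rep x)) (gF (rep x))) (aR (rep x))).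
  rewrite (rF_mul le_refl le_anti le_trans fab halpha faba).
  rewrite (rF_mul le_refl le_anti le_trans halpha fin_bb fab) (@bR_eq x).
  reflexivity.
transitivity (fe (rF (rep x) faba) (Xp x) Yp); first by [].
case: (gQ (rep x)) => [_ [[ha0 hg0]|[h1 h2]]].
- rewrite (E _ _ XY) /= (conv_0r _ ha0 XY) /fi_zero.
  by rewrite -[alpha x y]/(restrict alpha (Xp x) Yp) ha0.
- have h1' : eqv (mC (rep x) (aR (rep x)) (gF (rep x))) (oneF K (cl (rep x))) := h1.
  have E2 : eqv (rF (rep x) faba) (aR (rep x)).
    rewrite E h1'; exact: (mul1lF (@cle_refl T le le_refl (rep x))).
  exact: (E2 _ _ XY).
Qed.

Lemma bab : ieq le (conv le (conv le bb alpha) bb) bb.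
Proof.
move=> x y xy.
pose Yp : component le (rep x) := exist _ y (conn_le (proj2_sig (Xp x)) xy).
have XY : cl (rep x) (Xp x) Yp := xy.
have fba := conv_fin le_anti le_trans fin_bb halpha.
have fbab := conv_fin le_anti le_trans fba fin_bb.
have E : eqv (rF (rep x) fbab) (mC (rep x) (mC (rep x) (gF (rep x)) (aR (rep x))) (gF (rep x))).
  rewrite (rF_mul le_refl le_anti le_trans fba fin_bb fbab).
  rewrite (rF_mul le_refl le_anti le_trans fin_bb halpha fba) (@bR_eq x).
  reflexivity.
transitivity (fe (rF (rep x) fbab) (Xp x) Yp); first by [].
have hv : bb x y = g (Xp x) Yp := view (Xp x) Yp.
rewrite hv.
case: (gQ (rep x)) => [_ [[ha0 hg0]|[h1 h2]]].
- rewrite (E _ _ XY) /= (conv_0r _ hg0 XY) /fi_zero.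
  by rewrite (hg0 _ _ XY).
- have h2' : eqv (mC (rep x) (gF (rep x)) (aR (rep x))) (oneF K (cl (rep x))) := h2.
  have E2 : eqv (rF (rep x) fbab) (gF (rep x)).
    rewrite E h2'; exact: (mul1lF (@cle_refl T le le_refl (rep x))).
  exact: (E2 _ _ XY).
Qed.

Lemma uniq (c : T -> T -> K) (fc : finitary le c) :
  ieq le (conv le (conv le alpha c) alpha) alpha ->
  ieq le (conv le (conv le c alpha) c) c -> ieq le c bb.
Proof.
move=> hc1 hc2 x y xy.
pose Yp : component le (rep x) := exist _ y (conn_le (proj2_sig (Xp x)) xy).
have XY : cl (rep x) (Xp x) Yp := xy.
have hv : bb x y = g (Xp x) Yp := view (Xp x) Yp.
rewrite hv.
pose cF := rF (rep x) fc.
have fac := conv_fin le_anti le_trans halpha fc.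
have faca := conv_fin le_anti le_trans fac halpha.
have fca := conv_fin le_anti le_trans fc halpha.
have fcac := conv_fin le_anti le_trans fca fc.
have E1 : eqv (mC (rep x) (mC (rep x) (aR (rep x)) cF) (aR (rep x))) (aR (rep x)).
  have h : eqv (rF (rep x) faca) (aR (rep x)) := fun X Y XY => hc1 _ _ XY.
  rewrite (rF_mul le_refl le_anti le_trans fac halpha faca) in h.
  by rewrite (rF_mul le_refl le_anti le_trans halpha fc fac) in h.
have E2 : eqv (mC (rep x) (mC (rep x) cF (aR (rep x))) cF) cF.
  have h : eqv (rF (rep x) fcac) cF := fun X Y XY => hc2 _ _ XY.
  rewrite (rF_mul le_refl le_anti le_trans fca fc fcac) in h.
  by rewrite (rF_mul le_refl le_anti le_trans fc halpha fca) in h.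
transitivity (fe cF (Xp x) Yp); first by [].
case: (gQ (rep x)) => [_ [[ha0 hg0]|[h1 h2]]].
- rewrite -(E2 _ _ XY) /= (hg0 _ _ XY) /fi_zero.
  apply: (conv_0l _ _ XY) => X Y XY'; exact: (conv_0r _ ha0 XY').
- exact: (inv_unique (@cle_refl T le le_refl (rep x)) (a := aR (rep x)) (g := gF (rep x))
     (c := cF) h1 h2 E1 E2 XY).
Qed.

End Main.

Unset Implicit Arguments.

Theorem corollary4 (K : fieldType) (T : Type) (le : T -> T -> Prop)
  (le_refl : forall x, le x x)
  (le_anti : forall x y, le x y -> le y x -> x = y)
  (le_trans : forall x y z, le x y -> le y z -> le x z)
  (alpha : T -> T -> K) (halpha : finitary le alpha) :
  fi_superregular le alpha <->
  (forall x0 : T,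
     @ieq K (component le x0) (@comp_le T le x0) (@restrict K T le x0 alpha)
       (@fi_zero K (component le x0)) \/
     @fi_invertible K (component le x0) (@comp_le T le x0)
       (@restrict K T le x0 alpha)).
Proof.
split.
- move=> hs x0; exact: (dir1 le_refl le_anti le_trans x0 halpha hs).
- move=> H; split.
  + exists (bb H); split; [exact: fin_bb | exact: aba].
  + exists (bb H); split; first exact: fin_bb.
    split; first exact: aba.
    split; first exact: bab.
    move=> c fc h1 h2; exact: uniq.
Qed.
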